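(* Let $k\ge2$ and let $G=F_k$ be the free group of rank $k$, presented as $G=\langle S_{2k}\mid K\rangle$ with $S_{2k}=\{s_1,\dots,s_{2k}\}$ and $K(s_i,s_j)=0$ if and only if $|i-j|=k$. Let $\mathcal{A}$ be a finite alphabet, $A$ a $\{0,1\}$-matrix indexed by $\mathcal{A}$, and $X=X_{\mathbf{A},\mathbf{A}^t}$ the Markov tree shift on $F_k$ given by the $2k$-tuple $(A_1,\dots,A_k,A_1^t,\dots,A_k^t)$ with $A_1=\cdots=A_k=A$. Then the limit $\lim_{n\to\infty}\log p_n/|\Delta_n|$ exists and equals $h^{(s)}(X)$.
   Context: For a $\{0,1\}$-matrix $K$ indexed by generators $S=\{s_1,\dots,s_N\}$, $\langle S\mid K\rangle$ is the semigroup generated by $S$ with relations $s_is_j=1_G$ iff $K(s_i,s_j)=0$; here this is $F_k$ with $s_{i+k}=s_i^{-1}$. Every $g$ has a unique minimal (reduced) word $g=g_1\cdots g_n$, $|g|=n$. $\Delta_n=\{h\in G:|h|\le n\}$ and $\bar{\Delta}^{(g)}_n=\{gh:|h|\le n,\ |gh|=|g|+|h|\}$. A pattern $u:H\to\mathcal{A}$ ($H$ finite) is accepted by $t\in\mathcal{A}^G$ if there is $g$ with $t_{gh}=u_h$ for all $h\in H$; $p_n$ (resp. $p^{(g)}_n$) is the number of patterns on $\Delta_n$ (resp. $\bar{\Delta}^{(g)}_n$) accepted by some $t\in X$. For an $N$-tuple $(B_1,\dots,B_N)$ of $\{0,1\}$-matrices indexed by $\mathcal{A}$ the Markov tree shift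 is $\{t\in\mathcal{A}^G: B_i(t_g,t_{gs_i})=1 \text{ whenever } |gs_i|=|g|+1\}$. $A^t$ is the transpose. The $i$th stem entropy is $h^{(s_i)}(X)=\limsup_n\log p^{(s_i)}_n/|\bar{\Delta}^{(s_i)}_n|$; these coincide (as $K$ is primitive for $k\ge2$) and $h^{(s)}(X)$ is their common value. *)

(* Defs.v *)
From Stdlib Require Import ClassicalEpsilon.
From mathcomp Require Import all_boot.
Set Implicit Arguments. Unset Strict Implicit. Unset Printing Implicit Defensive.

(* Free group F_k presented by generators s_0, ..., s_{2k-1} (0-indexed),
   with s_{i+k} = s_i^{-1}, i.e. K(s_i,s_j) = 0 iff |i - j| = k. *)
Section FreeGroup.
Variable k : nat.
Notation gen := 'I_(2 * k).

Definition ginv (i : gen) : gen :=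
  Ordinal (ltn_pmod (i + k) (leq_ltn_trans (leq0n i) (ltn_ord i))).

(* words over the generators; group elements are the reduced words *)
Definition word := seq gen.

Definition reduced (w : word) : bool := sorted (fun a b => b != ginv a) w.

Definition rpush (w : word) (a : gen) : word :=
  if rev w is b :: r then (if a == ginv b then rev r else rcons w a)
  else [:: a].

Definition gmul (g h : word) : word := foldl rpush g h.

Fixpoint words (j : nat) : seq word :=
  if j is j'.+1 then [seq rcons w a | w <- words j', a <- enum gen]
  else [:: [::]].

Definition delta (n : nat) : seq word :=
  [seq w <- flatten [seq words j | j <- iota 0 n.+1] | reduced w].

Definition stemset (i : gen) (n : nat) : seq word :=
  [seq i :: h | h <- delta n & reduced (i :: h)].

(* Markov tree shift X_{A,A^t} on F_k: tuple (A_1..A_k, A_1^t..A_k^t), A_i = A.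
   B_i(t_g, t_{g s_i}) = 1 whenever |g s_i| = |g| + 1. *)
Definition markovB (A : finType) (Am : rel A) (i : gen) : rel A :=
  if i < k then Am else (fun a b => Am b a).

Definition inX (A : finType) (Am : rel A) (t : word -> A) : Prop :=
  forall (g : word) (i : gen), reduced g -> reduced (rcons g i) ->
    markovB Am i (t g) (t (rcons g i)).

Definition pbool (P : Prop) : bool :=
  if excluded_middle_informative P then true else false.

Definition npat (A : finType) (Am : rel A) (H : seq word) : nat :=
  #|[set u : (size H).-tuple A | pbool (exists t : word -> A, inX Am t /\
        exists g : word, reduced g /\ tval u = [seq t (gmul g h) | h <- H])]|.

Definition p_n (A : finType) (Am : rel A) (n : nat) : nat := npat Am (delta n).
Definition p_stem (A : finType) (Am : rel A) (i : gen) (n : nat) : nat :=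
  npat Am (stemset i n).

End FreeGroup.

(* Main.v *)
Require Import Defs.
From Stdlib Require Import Reals.
From Coquelicot Require Import Coquelicot.
From mathcomp Require Import all_boot.
From Stdlib Require Import Lra Lia ClassicalEpsilon.
From mathcomp Require Import zify.

Section Comb.
Local Open Scope nat_scope.
Set Implicit Arguments. Unset Strict Implicit. Unset Printing Implicit Defensive.

Lemma pboolP (P : Prop) : pbool P = true <-> P.
Proof. rewrite /pbool; case: excluded_middle_informative => //. Qed.

Section CardS.
Variable A : finType.

Definition cardS n (P : seq A -> Prop) : nat :=
  #|[set u : n.-tuple A | pbool (P u)]|.

Lemma in_cardS n (P : seq A -> Prop) (u : n.-tuple A) :
  (u \in [set u : n.-tuple A | pbool (P u)]) <-> P u.
Proof. by rewrite inE; apply: pboolP. Qed.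

Lemma cardS_inj n1 n2 (P1 P2 : seq A -> Prop) (f : seq A -> seq A) :
  (forall u, size u = n1 -> P1 u -> size (f u) = n2 /\ P2 (f u)) ->
  (forall u v, size u = n1 -> size v = n1 -> P1 u -> P1 v -> f u = f v -> u = v) ->
  cardS n1 P1 <= cardS n2 P2.
Proof.
move=> Hf Hinj; rewrite /cardS.
set S1 := [set u : n1.-tuple A | _].
case: (set_0Vmem S1) => [->|[u0 Hu0]]; first by rewrite cards0.
have [sz0 _] := Hf u0 (size_tuple u0) (proj1 (in_cardS _ _) Hu0).
have sz0' : size (f u0) == n2 by apply/eqP.
pose d := Tuple sz0'.
pose g (x : n1.-tuple A) : n2.-tuple A := insubd d (f x).
have gE x : x \in S1 -> val (g x) = f x.
  move=> /in_cardS Hx; rewrite val_insubd.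
  by have [-> _] := Hf x (size_tuple x) Hx; rewrite eqxx.
rewrite -(card_in_imset (f := g)); last first.
  move=> x y Hx Hy Hxy; apply: val_inj; apply: Hinj; rewrite ?size_tuple //.
  - exact/in_cardS.
  - exact/in_cardS.
  by rewrite -gE // -(gE y) // Hxy.
apply: subset_leq_card; apply/subsetP => z /imsetP [x Hx ->].
apply/in_cardS; rewrite gE //; have := Hf x (size_tuple x) (proj1 (in_cardS _ _) Hx).
by case.
Qed.

Lemma cardS_surj n1 n2 (P1 P2 : seq A -> Prop) (f : seq A -> seq A) :
  (forall v, size v = n2 -> P2 v -> exists u, [/\ size u = n1, P1 u & f u = v]) ->
  cardS n2 P2 <= cardS n1 P1.
Proof.
move=> Hf; rewrite /cardS.
set S2 := [set u : n2.-tuple A | _].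
case: (set_0Vmem S2) => [->|[v0 Hv0]]; first by rewrite cards0.
pose g (x : n1.-tuple A) : n2.-tuple A := insubd v0 (f x).
apply: leq_trans (leq_imset_card g _).
apply: subset_leq_card; apply/subsetP => v Hv.
have [u [su Pu fu]] := Hf v (size_tuple v) (proj1 (in_cardS _ _) Hv).
have su' : size u == n1 by apply/eqP.
apply/imsetP; exists (Tuple su'); first by apply/in_cardS.
apply: val_inj; rewrite /g val_insubd /= fu size_tuple eqxx //.
Qed.

Lemma cardS_prod n1 n2 (R P1 P2 : seq A -> Prop) :
  (forall u, size u = n1 + n2 -> R u -> P1 (take n1 u) /\ P2 (drop n1 u)) ->
  cardS (n1 + n2) R <= cardS n1 P1 * cardS n2 P2.
Proof.
move=> H; rewrite /cardS -cardsX.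
apply: leq_trans (leq_imset_card (fun x => cat_tuple x.1 x.2) _).
apply: subset_leq_card; apply/subsetP => u Hu.
have [H1 H2] := H u (size_tuple u) (proj1 (in_cardS _ _) Hu).
have s1 : size (take n1 u) == n1 by rewrite size_takel // size_tuple leq_addr.
have s2 : size (drop n1 u) == n2 by rewrite size_drop size_tuple addKn.
apply/imsetP; exists (Tuple s1, Tuple s2).
  by rewrite inE /=; apply/andP; split; apply/in_cardS.
by apply: val_inj; rewrite /= cat_take_drop.
Qed.

Lemma cardS_glue n1 n2 (R P1 P2 : seq A -> Prop) :
  (forall x y, size x = n1 -> size y = n2 -> P1 x -> P2 y -> R (x ++ y)) ->
  cardS n1 P1 * cardS n2 P2 <= cardS (n1 + n2) R.
Proof.
move=> H; rewrite /cardS -cardsX.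
rewrite -(card_in_imset (f := fun x => cat_tuple x.1 x.2)); last first.
  move=> [x1 x2] [y1 y2] _ _ /= /(congr1 val) /= /eqP.
  rewrite eqseq_cat; last by rewrite !size_tuple.
  by case/andP => /eqP e1 /eqP e2; congr pair; apply: val_inj.
apply: subset_leq_card; apply/subsetP => u /imsetP [[x y] Hxy ->].
move: Hxy; rewrite in_setX => /andP [Hx Hy]; apply/in_cardS; rewrite /=.
by apply: H; rewrite ?size_tuple //; apply/in_cardS.
Qed.

Lemma cardS_split n (R : seq A -> Prop) (Ra : A -> seq A -> Prop) :
  (forall a u, size u = n -> R (a :: u) -> Ra a u) ->
  cardS n.+1 R <= \sum_(a : A) cardS n (Ra a).
Proof.
move=> H.
have -> : cardS n.+1 R = \sum_(a : A) cardS n.+1 (fun u => R u /\ head a u = a).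
  rewrite /cardS -sum1_card (partition_big (fun u : n.+1.-tuple A => thead u) predT) //=.
  apply: eq_bigr => a _; rewrite -sum1_card; apply: eq_bigl => u.
  apply/idP/idP.
    case/andP => /(in_cardS R) Hu /eqP Ha.
    apply/(in_cardS (fun u0 => R u0 /\ head a u0 = a)); split => //.
    by case: u Ha {Hu} => [[|b s] su] //= <-; rewrite /thead (tnth_nth b) /=.
  case/(in_cardS (fun u0 => R u0 /\ head a u0 = a)) => Hu Ha.
  apply/andP; split; first by apply/(in_cardS R).
  by case: u Ha {Hu} => [[|b s] su] //= <-; rewrite /thead (tnth_nth b) /=.
apply: leq_sum => a _; apply: (cardS_inj (f := behead)).
  move=> [|b u] //= [su] [Ru Hb]; subst b; split => //; exact: H.
by move=> [|b u] [|c v] //= _ _ [_ <-] [_ <-] ->.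
Qed.

Lemma cardS_ext n (P1 P2 : seq A -> Prop) :
  (forall u, size u = n -> P1 u <-> P2 u) -> cardS n P1 = cardS n P2.
Proof.
move=> H; rewrite /cardS; apply: eq_card => u; rewrite !inE.
by apply/idP/idP => /pboolP Hu; apply/pboolP; apply/(H u (size_tuple u)).
Qed.

Lemma cardS_pos n (P : seq A -> Prop) u : size u = n -> P u -> 0 < cardS n P.
Proof.
move=> su Pu; have su' : size u == n by apply/eqP.
by apply/card_gt0P; exists (Tuple su'); apply/in_cardS.
Qed.

Lemma cardS_le1 (P : seq A -> Prop) : cardS 0 P <= 1.
Proof.
rewrite /cardS; apply: leq_trans (max_card _) _.
by rewrite card_tuple expn0.
Qed.

End CardS.

Section Words.
Variable k : nat.
Hypothesis kpos : 0 < k.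
Notation gen := 'I_(2 * k).
Notation word := (word k).

Lemma ginvE (i : gen) : val (ginv i) = if i < k then i + k else i - k.
Proof.
rewrite /ginv /=; have hi := ltn_ord i; case: ltnP => h.
  by rewrite modn_small //; lia.
have -> : i + k = (i - k) + 2 * k by lia.
by rewrite modnDr modn_small //; lia.
Qed.

Lemma ginvK (i : gen) : ginv (ginv i) = i.
Proof.
apply: val_inj; rewrite !ginvE /=; have hi := ltn_ord i.
case: (ltnP i k) => h; case: ifP => h2; lia.
Qed.

Lemma ginv_inj : injective (@ginv k).
Proof. by move=> x y e; rewrite -(ginvK x) e ginvK. Qed.

Lemma ginv_lt (i : gen) : (ginv i < k) = ~~ (i < k).
Proof. rewrite ginvE; have hi := ltn_ord i; case: (ltnP i k) => h /=; apply/idP/idP => // ; lia. Qed.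

Lemma markovB_ginv (A : finType) (Am : rel A) (i : gen) a b :
  markovB Am (ginv i) a b = markovB Am i b a.
Proof. by rewrite /markovB ginv_lt; case: (i < k). Qed.

Lemma reduced_rcons2 (w : word) b a :
  reduced (rcons (rcons w b) a) = reduced (rcons w b) && (a != ginv b).
Proof.
rewrite /reduced; case: w => [|c w] //=.
  by rewrite andbT. by rewrite rcons_path last_rcons.
Qed.

Lemma reduced_nil : reduced ([::] : word). Proof. by []. Qed.
Lemma reduced1 (a : gen) : reduced [:: a]. Proof. by []. Qed.

Lemma reduced_rconsK (w : word) a : reduced (rcons w a) -> reduced w.
Proof.
case/lastP: w => [|w b] // ; by rewrite reduced_rcons2 => /andP [].
Qed.

Lemma reduced_consK (w : word) a : reduced (a :: w) -> reduced w.
Proof. rewrite /reduced /=; exact: path_sorted. Qed.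

Lemma reduced_cat_l (u v : word) : reduced (u ++ v) -> reduced u.
Proof.
elim/last_ind: v => [|v a IH]; first by rewrite cats0.
by rewrite -rcons_cat => /reduced_rconsK.
Qed.

Lemma reduced_cat_r (u v : word) : reduced (u ++ v) -> reduced v.
Proof. elim: u => [|a u IH] //= /reduced_consK; exact: IH. Qed.

Lemma reduced_cons2 (a b : gen) (w : word) :
  reduced (a :: b :: w) = (b != ginv a) && reduced (b :: w).
Proof. by []. Qed.

Lemma rpush_rcons (w : word) b a :
  rpush (rcons w b) a = if a == ginv b then w else rcons (rcons w b) a.
Proof. by rewrite /rpush rev_rcons revK. Qed.

Lemma reduced_rpush (w : word) a : reduced w -> reduced (rpush w a).
Proof.
case/lastP: w => [|w b] // Hw; rewrite rpush_rcons.
case: eqP => [_|/eqP ne]; first exact: reduced_rconsK Hw.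
by rewrite reduced_rcons2 Hw.
Qed.

Lemma gmul_rcons (g h : word) a : gmul g (rcons h a) = rpush (gmul g h) a.
Proof. by rewrite /gmul foldl_rcons. Qed.

Lemma gmul_cons (g h : word) a : gmul g (a :: h) = gmul (rpush g a) h.
Proof. by []. Qed.

Lemma reduced_gmul (g h : word) : reduced g -> reduced (gmul g h).
Proof.
move=> Hg; elim/last_ind: h => [|h a IH] //.
by rewrite gmul_rcons; apply: reduced_rpush.
Qed.

Lemma gmul_cat (g h : word) : reduced (g ++ h) -> gmul g h = g ++ h.
Proof.
elim/last_ind: h => [|h a IH]; first by rewrite cats0.
rewrite -rcons_cat => Hr; rewrite gmul_rcons IH; last exact: reduced_rconsK Hr.
move: Hr; case/lastP: (g ++ h) => [|u b] // .
by rewrite reduced_rcons2 rpush_rcons => /andP [_ /negbTE ->].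
Qed.

Lemma gmul_nil (h : word) : reduced h -> gmul [::] h = h.
Proof. move=> H; exact: (@gmul_cat [::] h H). Qed.

Lemma mem_words (w : word) j : (w \in words k j) = (size w == j).
Proof.
elim: j w => [|j IH] w; first by rewrite inE size_eq0.
apply/idP/idP.
  case/allpairsP => [[x y]] /= [Hx _ ->].
  by rewrite size_rcons eqSS -IH.
case/lastP: w => [|w a] //; rewrite size_rcons eqSS => Hw.
by apply: allpairs_f; rewrite ?IH ?mem_enum.
Qed.

Lemma mem_delta (w : word) N : (w \in delta k N) = reduced w && (size w <= N).
Proof.
rewrite /delta mem_filter; congr andb; apply/idP/idP.
  by case/flatten_mapP => j; rewrite mem_iota mem_words add0n => /andP [_ Hj] /eqP ->.
move=> Hw; apply/flatten_mapP; exists (size w); last by rewrite mem_words.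
by rewrite mem_iota add0n ltnS.
Qed.

Lemma mem_stem (i : gen) (w : word) N :
  (w \in stemset i N) = if w is j :: h then [&& j == i, reduced w & size h <= N] else false.
Proof.
rewrite /stemset; apply/mapP/idP.
  case=> h; rewrite mem_filter mem_delta => /andP [Hr /andP [_ Hs]] ->.
  by rewrite eqxx Hr Hs.
case: w => [|j h] //; case/and3P => /eqP -> Hr Hs; exists h => //.
by rewrite mem_filter mem_delta Hr Hs (reduced_consK Hr).
Qed.

End Words.

Section Cw.
Variable k : nat.
Hypothesis kpos : 0 < k.
Notation gen := 'I_(2 * k).
Notation word := (word k).
Variable A : finType.
Variable Am : rel A.

Definition Cw (Y : (word -> A) -> Prop) (H : seq word) : nat :=
  cardS (size H) (fun u => exists t, Y t /\ u = map t H).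

Lemma Cw_empty Y H : (forall t, ~ Y t) -> Cw Y H = 0.
Proof.
move=> HY; rewrite /Cw /cardS; apply/eqP; rewrite cards_eq0; apply/eqP.
apply/setP => u; rewrite !inE; apply/negbTE/negP => /pboolP [t [Yt _]].
exact: HY Yt.
Qed.

Lemma Cw_pos Y H t : Y t -> 0 < Cw Y H.
Proof. by move=> Yt; apply: (@cardS_pos _ _ _ (map t H)); rewrite ?size_map //; exists t. Qed.

Lemma Cw_transfer (Y1 Y2 : (word -> A) -> Prop) (F : (word -> A) -> (word -> A))
    (H1 H2 : seq word) :
  (forall t, Y1 t -> Y2 (F t)) ->
  (forall h, h \in H1 -> exists2 h', h' \in H2 & forall t, Y1 t -> t h = F t h') ->
  Cw Y1 H1 <= Cw Y2 H2.
Proof.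
move=> HF HH.
case: (excluded_middle_informative (exists t, Y1 t)) => [[t0 Yt0]|no]; last first.
  by rewrite Cw_empty // => t Yt; apply: no; exists t.
have Hex : forall h, exists h', h \in H1 -> h' \in H2 /\ forall t, Y1 t -> t h = F t h'.
  move=> h; case: (boolP (h \in H1)) => Hh; last by exists h.
  by have [h' ? ?] := HH h Hh; exists h'.
pose rho h := proj1_sig (constructive_indefinite_description _ (Hex h)).
have Hrho h : h \in H1 -> rho h \in H2 /\ forall t, Y1 t -> t h = F t (rho h).
  by rewrite /rho; case: constructive_indefinite_description.
pose a0 := t0 [::].
apply: (cardS_surj (f := fun v => map (fun h => nth a0 v (index (rho h) H2)) H1)).
move=> v _ [t [Yt ->]]; exists (map (F t) H2); split; rewrite ?size_map //.
  by exists (F t); split => //; apply: HF.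
apply/eq_in_map => h Hh; have [Hr Ht] := Hrho h Hh.
by rewrite (nth_map (rho h)) ?index_mem // nth_index // -Ht.
Qed.

Lemma Cw_mono (Y1 Y2 : (word -> A) -> Prop) H1 H2 :
  (forall t, Y1 t -> Y2 t) -> {subset H1 <= H2} -> Cw Y1 H1 <= Cw Y2 H2.
Proof.
move=> HY HH; apply: (Cw_transfer (F := id)) => // h Hh.
by exists h => //; apply: HH.
Qed.

Lemma Cw_cat Y H1 H2 : Cw Y (H1 ++ H2) <= Cw Y H1 * Cw Y H2.
Proof.
rewrite /Cw size_cat; apply: cardS_prod => u _ [t [Yt ->]].
rewrite map_cat; split; exists t; split => //.
  by rewrite take_size_cat ?size_map.
by rewrite drop_size_cat ?size_map.
Qed.

Lemma Cw_flatten (I : Type) Y (f : I -> seq word) (L : seq I) :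
  Cw Y (flatten (map f L)) <= \prod_(l <- L) Cw Y (f l).
Proof.
elim: L => [|l L IH]; first by rewrite big_nil; apply: cardS_le1.
rewrite /= big_cons; apply: leq_trans (Cw_cat _ _ _) _.
exact: leq_mul.
Qed.

Lemma Cw_split Y w H :
  Cw Y (w :: H) <= \sum_(a : A) Cw (fun t => Y t /\ t w = a) H.
Proof.
rewrite /Cw /=; apply: cardS_split => a u _ [t [Yt [e1 e2]]].
by exists t; split.
Qed.

Lemma Cw_glue Y H1 H2 :
  (forall t1 t2, Y t1 -> Y t2 ->
     exists t, [/\ Y t, map t H1 = map t1 H1 & map t H2 = map t2 H2]) ->
  Cw Y H1 * Cw Y H2 <= Cw Y (H1 ++ H2).
Proof.
move=> HG; rewrite /Cw size_cat; apply: cardS_glue => x y _ _ [t1 [Y1 ->]] [t2 [Y2 ->]].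
have [t [Yt e1 e2]] := HG t1 t2 Y1 Y2.
by exists t; split => //; rewrite map_cat e1 e2.
Qed.

Notation X0 := (@inX k A Am).

Lemma inX_shift (g : word) t : reduced g -> X0 t -> X0 (fun w => t (gmul g w)).
Proof.
move=> Hg Ht w i Hw _ /=; rewrite gmul_rcons.
have := reduced_gmul w Hg; case/lastP: (gmul g w) => [|v b] Hv.
  by apply: (Ht [::] i).
rewrite rpush_rcons; case: eqP => [ei|/eqP ne].
  have eb : b = ginv i by rewrite ei ginvK.
  rewrite -markovB_ginv // -eb; apply: Ht; first exact: reduced_rconsK Hv.
  exact: Hv.
by apply: Ht => //; rewrite reduced_rcons2 Hv ne.
Qed.

Lemma npat_Cw (H : seq word) : all (@reduced k) H -> npat Am H = Cw X0 H.
Proof.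
move=> Hr.
change (cardS (size H) (fun u => exists t, X0 t /\ exists g : word, reduced g /\
   u = [seq t (gmul g h) | h <- H]) = Cw X0 H).
apply: cardS_ext => u _; split.
  case=> t [Ht [g [Hg ->]]]; exists (fun w => t (gmul g w)); split => //.
  exact: inX_shift.
case=> t [Ht ->]; exists t; split => //; exists [::]; split => //.
apply/eq_in_map => h Hh; rewrite gmul_nil //; exact: (allP Hr).
Qed.

Lemma reduced_map (s : gen -> gen) (w : word) :
  injective s -> (forall i, s (ginv i) = ginv (s i)) -> reduced (map s w) = reduced w.
Proof.
move=> si sg; rewrite /reduced sorted_map; apply: eq_sorted => a b /=.
by rewrite -sg (inj_eq si).
Qed.

Lemma inX_perm (s : gen -> gen) t :
  injective s -> (forall i, s (ginv i) = ginv (s i)) ->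
  (forall i, (s i < k) = (i < k)) ->
  X0 t -> X0 (fun w => t (map s w)).
Proof.
move=> si sg sc Ht w i Hw Hwi /=; rewrite map_rcons.
have -> : markovB Am i = markovB Am (s i) by rewrite /markovB sc.
apply: Ht; first by rewrite reduced_map.
by rewrite -map_rcons reduced_map.
Qed.

Definition glue (l : gen) (t1 t2 : word -> A) (w : word) : A :=
  if w is a :: _ then (if a == l then t1 w else t2 w) else t1 w.

Lemma inX_glue l t1 t2 : X0 t1 -> X0 t2 -> t1 [::] = t2 [::] -> X0 (glue l t1 t2).
Proof.
move=> H1 H2 e w i Hw Hwi; case: w Hw Hwi => [|a w] Hw Hwi /=.
  case: (i == l); first by apply: (H1 [::] i).
  by rewrite e; apply: (H2 [::] i).
by case: (a == l); [apply: (H1 (a :: w)) | apply: (H2 (a :: w))].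
Qed.

End Cw.

Section Main.
Variable k : nat.
Hypothesis kpos : 0 < k.
Notation gen := 'I_(2 * k).
Notation word := (word k).
Variable A : finType.
Variable Am : rel A.
Notation X0 := (@inX k A Am).

Definition Yc (c : A) (t : word -> A) := X0 t /\ t [::] = c.
Definition PP N (j : gen) := Cw X0 (stemset j N).
Definition QQ N (j : gen) c := Cw (Yc c) (stemset j N).
Definition pb N := Cw X0 (delta k N).

Lemma stem_cons (l : gen) (h : word) N : h \in stemset l N -> exists w, h = l :: w.
Proof. by rewrite mem_stem; case: h => [|a w] // /and3P [/eqP -> _ _]; exists w. Qed.

Lemma stem_reduced (l : gen) (h : word) N : h \in stemset l N -> reduced h.
Proof. by rewrite mem_stem; case: h => [|a w] // /and3P []. Qed.

Lemma D1 N (j : gen) :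
  PP N.+1 j <= \sum_(a : A) \prod_(l <- enum gen | l != ginv j) QQ N l a.
Proof.
pose L := [seq l <- enum gen | l != ginv j].
apply: leq_trans
  (Cw_mono (Y2 := X0) (H2 := [:: j] :: flatten [seq map (cons j) (stemset l N) | l <- L]) _ _) _.
- by [].
- move=> h; rewrite mem_stem; case: h => [|a h] //; case/and3P => /eqP -> Hr Hs.
  case: h Hr Hs => [|l w] Hr Hs; first by rewrite mem_head.
  rewrite inE; apply/orP; right; apply/flatten_mapP; exists l.
    by rewrite mem_filter mem_enum andbT; move: Hr; rewrite reduced_cons2 => /andP [].
  by apply: map_f; rewrite mem_stem eqxx (reduced_consK Hr).
apply: leq_trans (Cw_split _ _ _) _; apply: leq_sum => a _.
apply: leq_trans (Cw_flatten _ _ _) _.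
rewrite /L big_filter big_seq_cond [X in _ <= X]big_seq_cond.
apply: leq_prod => l /andP [_ Hl].
apply: (Cw_transfer (F := fun t w => t (gmul [:: j] w))).
  move=> t [Ht e]; split; first by apply: inX_shift.
  by [].
move=> h /mapP [w Hw ->]; exists w => // t _.
rewrite (@gmul_cat _ [:: j] w) //.
have [w' ew] := stem_cons Hw; move: (stem_reduced Hw); rewrite ew => Hr.
by rewrite cat1s reduced_cons2 Hl.
Qed.

Lemma D2 N : pb N.+1 <= \sum_(c : A) \prod_(l <- enum gen) QQ N l c.
Proof.
apply: leq_trans
  (Cw_mono (Y2 := X0) (H2 := [::] :: flatten [seq stemset l N | l <- enum gen]) _ _) _.
- by [].
- move=> h; rewrite mem_delta; case: h => [|l w]; first by rewrite mem_head.
  case/andP => Hr Hs; rewrite inE; apply/orP; right; apply/flatten_mapP; exists l.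
    by rewrite mem_enum.
  by rewrite mem_stem eqxx Hr.
apply: leq_trans (Cw_split _ _ _) _; apply: leq_sum => c _.
exact: (Cw_flatten _ _ _).
Qed.

Lemma glue_prod N c (L : seq gen) t0 : Yc c t0 -> uniq L ->
  \prod_(l <- L) QQ N l c <= Cw (Yc c) (flatten [seq stemset l N | l <- L]).
Proof.
move=> Y0; elim: L => [|l L IH]; first by rewrite big_nil => _; exact: (Cw_pos _ Y0).
rewrite cons_uniq => /andP [lL uL]; rewrite big_cons /=.
apply: leq_trans (leq_mul (leqnn _) (IH uL)) _.
apply: Cw_glue => t1 t2 [X1 e1] [X2 e2]; exists (glue l t1 t2); split.
- split; first by apply: inX_glue; rewrite ?e1 ?e2.
  by [].
- apply/eq_in_map => h Hh; have [w ->] := stem_cons Hh; by rewrite /= eqxx.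
apply/eq_in_map => h /flatten_mapP [l' Hl' Hh]; have [w ->] := stem_cons Hh.
rewrite /= ifN //; apply/eqP => e; move: lL; by rewrite -e Hl'.
Qed.

Lemma D3 N c : \prod_(l <- enum gen) QQ N l c <= pb N.+1.
Proof.
case: (excluded_middle_informative (exists t, Yc c t)) => [[t0 Y0]|no].
  apply: leq_trans (glue_prod N Y0 (enum_uniq _)) _.
  apply: Cw_mono => [t []//|h /flatten_mapP [l _ Hh]].
  have [w ew] := stem_cons Hh; have Hr := stem_reduced Hh.
  move: Hh; rewrite mem_stem mem_delta ew => /and3P [_ _ Hs].
  by rewrite -ew Hr ew.
have H0 : 0 < 2 * k by rewrite muln_gt0.
rewrite (bigD1_seq (Ordinal H0)) ?mem_enum ?enum_uniq //.
by rewrite {1}/QQ Cw_empty // => t Yt; apply: no; exists t.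
Qed.

Lemma D4 N l c : QQ N l c <= PP N l.
Proof. by apply: Cw_mono => [t []|]. Qed.

Section Sym.
Variables l1 l2 : gen.
Hypothesis cl : (l1 < k) = (l2 < k).
Definition sw (x : gen) : gen := if x == l1 then l2 else if x == l2 then l1 else x.
Lemma swK : involutive sw.
Proof.
move=> x; rewrite /sw.
have [->|n1] := eqVneq x l1.
  rewrite eqxx; have [->|n2] := eqVneq l2 l1; first by rewrite ?eqxx.
  by [].
have [->|n2] := eqVneq x l2.
  by rewrite eqxx.
by rewrite (negbTE n1) (negbTE n2).
Qed.
Lemma sw_cl x : (sw x < k) = (x < k).
Proof. by rewrite /sw; case: eqVneq => [->|_]; [|case: eqVneq => [->|]]. Qed.
Definition sg (x : gen) : gen :=
  if (x < k) == (l1 < k) then sw x else ginv (sw (ginv x)).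
Lemma sg_cl x : (sg x < k) = (x < k).
Proof. rewrite /sg; case: ifP => _; first by rewrite sw_cl. by rewrite (ginv_lt kpos) sw_cl (ginv_lt kpos) negbK. Qed.
Lemma sgK : involutive sg.
Proof.
move=> x; rewrite {2}/sg; case: ifP => e.
  by rewrite /sg sw_cl e swK.
rewrite /sg (ginv_lt kpos) sw_cl (ginv_lt kpos) negbK e (ginvK kpos) swK (ginvK kpos) //.
Qed.
Lemma sg_ginv x : sg (ginv x) = ginv (sg x).
Proof.
rewrite /sg (ginv_lt kpos); case: (x < k); case: (l1 < k) => //=; by rewrite ginvK.
Qed.
Lemma sg_l1 : sg l1 = l2.
Proof. by rewrite /sg eqxx /sw eqxx. Qed.

Lemma D5 (Y : (word -> A) -> Prop) N :
  (forall t, Y t -> Y (fun w => t (map sg w))) ->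
  Cw Y (stemset l1 N) <= Cw Y (stemset l2 N).
Proof.
move=> HY; apply: (Cw_transfer (F := fun t w => t (map sg w))) => // h Hh.
exists (map sg h).
  have Hr := stem_reduced Hh; have [w ew] := stem_cons Hh.
  move: Hh Hr; rewrite ew mem_stem => /and3P [_ _ Hs] Hr.
  have -> : map sg (l1 :: w) = l2 :: map sg w by rewrite /= sg_l1.
  rewrite mem_stem eqxx size_map Hs -sg_l1 -map_cons reduced_map //.
  - by rewrite Hr.
  - exact: inv_inj sgK.
  - exact: sg_ginv.
by move=> t _; rewrite (mapK sgK).
Qed.
End Sym.

Lemma sg_good (l1 l2 : gen) : (l1 < k) = (l2 < k) ->
  [/\ injective (sg l1 l2), forall i, sg l1 l2 (ginv i) = ginv (sg l1 l2 i)
    & forall i, (sg l1 l2 i < k) = (i < k)].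
Proof.
move=> cl; split; [exact: inv_inj (sgK cl) | exact: sg_ginv | exact: sg_cl].
Qed.

Lemma QQ_sym N c (l1 l2 : gen) : (l1 < k) = (l2 < k) -> QQ N l1 c <= QQ N l2 c.
Proof.
move=> cl; apply: D5 => // t [Ht e]; have [si sgi sc] := sg_good cl.
by split; [apply: inX_perm | ].
Qed.

Lemma PP_sym N (l1 l2 : gen) : (l1 < k) = (l2 < k) -> PP N l1 = PP N l2.
Proof.
move=> cl; apply/eqP; rewrite eqn_leq; apply/andP; split; apply: D5;
  try (by rewrite cl); move=> t Ht.
- by have [si sgi sc] := sg_good cl; apply: inX_perm.
- have cl' : (l2 < k) = (l1 < k) by rewrite cl.
  by have [si sgi sc] := sg_good cl'; apply: inX_perm.
Qed.

End Main.

Section Sizes.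
Variable k : nat.
Hypothesis kpos : 0 < k.
Notation gen := 'I_(2 * k).
Notation word := (word k).

Lemma count_neq (m : gen) : count (fun a => a != m) (enum gen) = (2 * k).-1.
Proof.
have := count_predC (pred1 m) (enum gen).
rewrite size_enum_ord (count_uniq_mem _ (enum_uniq _)) mem_enum.
have -> : count (predC (pred1 m)) (enum gen) = count (fun a => a != m) (enum gen).
  by apply: eq_count => a.
move=> H; have Hm : (m \in gen) = true by []. rewrite Hm in H; lia.
Qed.

Lemma count_rcons_red (u : word) :
  count (fun a => reduced (rcons u a)) (enum gen) =
  if reduced u then (if u is [::] then 2 * k else (2 * k).-1) else 0.
Proof.
case/lastP: u => [|u b].
  by rewrite /= (eq_count (a2 := predT)) // count_predT size_enum_ord.
rewrite (eq_count (a2 := fun a => reduced (rcons u b) && (a != ginv b))); last first.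
  by move=> a; rewrite reduced_rcons2.
case: (reduced (rcons u b)) => /=.
  by rewrite count_neq; case: u.
by rewrite (eq_count (a2 := pred0)) // count_pred0.
Qed.

Definition cnt (pre : word) j := count (fun h => reduced (pre ++ h)) (words k j).

Lemma sumn_if (T : Type) (P : pred T) c (s : seq T) :
  sumn [seq (if P w then c else 0) | w <- s] = c * count P s.
Proof. elim: s => [|w s IH] /=; first by rewrite muln0. rewrite IH; case: (P w) => /=; lia. Qed.

Lemma cnt_S pre j : cnt pre j.+1 =
  sumn [seq (if reduced (pre ++ w) then (if pre ++ w is [::] then 2 * k else (2 * k).-1) else 0)
       | w <- words k j].
Proof.
rewrite /cnt /= count_flatten -map_comp; congr sumn; apply: eq_map => w /=.
rewrite count_map -count_rcons_red; apply: eq_count => a /=.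
by rewrite /preim /= rcons_cat.
Qed.

Lemma cnt1 (i : gen) j : cnt [:: i] j = ((2 * k).-1) ^ j.
Proof.
elim: j => [|j IH]; first by [].
rewrite cnt_S /= (eq_map (g := fun w => if reduced (i :: w) then (2 * k).-1 else 0)).
  by rewrite sumn_if -/(cnt [:: i] j) IH expnS.
by move=> w.
Qed.

Lemma cnt0 j : cnt [::] j.+1 = 2 * k * ((2 * k).-1) ^ j.
Proof.
elim: j => [|j IH]; first by rewrite cnt_S /= expn0 muln1 addn0.
rewrite cnt_S /=.
rewrite (_ : map _ _ = map (fun w => if reduced w then (2 * k).-1 else 0) (words k j.+1)).
  by rewrite sumn_if -/(cnt [::] j.+1) IH expnS; lia.
apply/eq_in_map => -[|a w] // /allpairsP [[x y] /= [_ _]]; by case: x.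
Qed.

Lemma size_delta_sum N : size (delta k N) = sumn [seq cnt [::] j | j <- iota 0 N.+1].
Proof. by rewrite /delta size_filter count_flatten -map_comp. Qed.

Lemma size_stem_sum (i : gen) N :
  size (stemset i N) = sumn [seq cnt [:: i] j | j <- iota 0 N.+1].
Proof.
rewrite /stemset size_map size_filter /delta count_filter count_flatten -map_comp.
congr sumn; apply: eq_map => j /=; apply: eq_count => h /=.
by case: (boolP (path _ i h)) => // Hp /=; exact: (path_sorted Hp).
Qed.

Lemma iotaS N : iota 0 N.+2 = iota 0 N.+1 ++ [:: N.+1].
Proof. by rewrite -addn1 iotaD. Qed.

Lemma size_stem (i : gen) N :
  ((2 * k).-1).-1 * size (stemset i N) + 1 = ((2 * k).-1) ^ N.+1.
Proof.
rewrite size_stem_sum; elim: N => [|N IH]; first by rewrite /= cnt1 expn0 expn1; lia.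
rewrite iotaS map_cat sumn_cat [sumn [:: _]]/= addn0 cnt1.
move: IH; set s := sumn _; set X := _ ^ N.+1; move=> IH.
rewrite [_ ^ N.+2]expnS -/X; nia.
Qed.

Lemma size_delta N :
  ((2 * k).-1).-1 * size (delta k N) + 2 * k = ((2 * k).-1).-1 + 2 * k * ((2 * k).-1) ^ N.
Proof.
rewrite size_delta_sum; elim: N => [|N IH]; first by rewrite /= /cnt /= expn0; lia.
rewrite iotaS map_cat sumn_cat [sumn [:: _]]/= addn0 cnt0.
move: IH; set s := sumn _; set X := _ ^ N; move=> IH; rewrite expnS -/X; nia.
Qed.

End Sizes.

Section Ineq.
Variable k : nat.
Hypothesis kpos : 0 < k.
Notation gen := 'I_(2 * k).
Notation word := (word k).
Variable A : finType.
Variable Am : rel A.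
Notation X0 := (@inX k A Am).
Notation PP := (PP Am).
Notation QQ := (QQ Am).
Notation pb := (pb k Am).

Lemma sum_const_A n : \sum_(a : A) n = #|A| * n.
Proof. by rewrite sum_nat_const. Qed.

Lemma ineq_a N (j : gen) :
  PP N.+1 j <= #|A| * \prod_(l <- enum gen | l != ginv j) PP N l.
Proof.
apply: leq_trans (D1 kpos Am _ _) _; rewrite -sum_const_A; apply: leq_sum => a _.
by apply: leq_prod => l _; apply: D4.
Qed.

Lemma ineq_b N : pb N.+1 <= #|A| * \prod_(l <- enum gen) PP N l.
Proof.
apply: leq_trans (D2 k Am _) _; rewrite -sum_const_A; apply: leq_sum => a _.
by apply: leq_prod => l _; apply: D4.
Qed.

Lemma argmax_exists (f : A -> nat) (a0 : A) : exists c0, forall a, f a <= f c0.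
Proof. by case: (@arg_maxnP A a0 predT f) => // c0 _ H; exists c0 => a; apply: H. Qed.

Lemma prod_D1 (F : gen -> nat) (P : pred gen) (l : gen) : P l ->
  \prod_(x <- enum gen | P x) F x = F l * \prod_(x <- [seq x <- enum gen | P x] | x != l) F x.
Proof.
move=> Pl; rewrite -big_filter (bigD1_seq l) //.
  by rewrite mem_filter Pl mem_enum.
by rewrite filter_uniq // enum_uniq.
Qed.

Lemma ineq_c N (j l' : gen) : l' != ginv j -> (l' < k) = (ginv j < k) ->
  PP N.+1 j ^ 2 * PP N l' <=
  #|A| ^ 2 * pb N.+1 * \prod_(l <- enum gen | l != ginv j) PP N l.
Proof.
move=> nl cl.
case: (excluded_middle_informative (exists t, X0 t)) => [[t0 Ht0]|no]; last first.
  by rewrite /PP Cw_empty // => t Ht; apply: no; exists t.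
set m := ginv j.
pose Pi a := \prod_(l <- enum gen | l != m) QQ N l a.
have [c0 Hc0] := argmax_exists Pi (t0 [::]).
have h1 : PP N.+1 j <= #|A| * Pi c0.
  apply: leq_trans (D1 kpos Am _ _) _; rewrite -sum_const_A; by apply: leq_sum => a _; apply: Hc0.
set Rq := \prod_(x <- [seq x <- enum gen | x != m] | x != l') QQ N x c0.
set Rp := \prod_(x <- [seq x <- enum gen | x != m] | x != l') PP N x.
have ePi : Pi c0 = QQ N l' c0 * Rq by rewrite /Pi (@prod_D1 _ (fun x => x != m) l' nl).
have ePp : \prod_(l <- enum gen | l != m) PP N l = PP N l' * Rp.
  by rewrite (@prod_D1 _ (fun x => x != m) l' nl).
have hR : Rq <= Rp by apply: leq_prod => x _; apply: D4.
have h2 : QQ N l' c0 * Pi c0 <= pb N.+1.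
  apply: leq_trans (D3 kpos Am _ c0).
  rewrite (bigD1_seq m) ?mem_enum ?enum_uniq // -/(Pi c0).
  by apply: leq_mul => //; apply: (QQ_sym kpos).
have h3 : Pi c0 * Pi c0 * PP N l' <= pb N.+1 * \prod_(l <- enum gen | l != m) PP N l.
  rewrite ePp; have -> : Pi c0 * Pi c0 * PP N l' = (QQ N l' c0 * Pi c0) * (Rq * PP N l').
    by rewrite {2}ePi; nia.
  rewrite [PP N l' * Rp]mulnC; apply: leq_mul => //; exact: leq_mul.
apply: leq_trans (_ : (#|A| * Pi c0) ^ 2 * PP N l' <= _).
  by apply: leq_mul => //; rewrite leq_exp2r.
rewrite expnMn -mulnA -mulnA; apply: leq_mul => //.
Qed.

End Ineq.

End Comb.

Unset Implicit Arguments.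
Section RealPart.
Local Open Scope R_scope.

Lemma geom_div0 (lam c : R) : 1 < lam -> is_lim_seq (fun n => c / lam ^ n) 0.
Proof.
move=> hl.
have hq : Rabs (/ lam) < 1.
  rewrite Rabs_pos_eq; last by apply: Rlt_le; apply: Rinv_0_lt_compat; lra.
  rewrite -Rinv_1; apply: Rinv_lt_contravar; lra.
have := is_lim_seq_scal_l _ c _ (is_lim_seq_geom _ hq).
rewrite /= Rmult_0_r; apply: is_lim_seq_ext => n.
by rewrite pow_inv.
Qed.

Lemma contraction (q : R) (z e : nat -> R) :
  0 <= q < 1 -> (forall n, z (S n) <= q * z n + e n) -> is_lim_seq e 0 ->
  forall eps, 0 < eps -> eventually (fun n => z n <= eps).
Proof.
move=> [q0 q1] hz he eps heps.
have hd : 0 < eps * (1 - q) / 2 by apply: Rmult_lt_0_compat; [nra | lra].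
have [N1 HN1] := proj2 (is_lim_seq_spec e 0) he (mkposreal _ hd).
pose m n := Rmax (z (N1 + n)%nat - eps / 2) 0.
have hm : forall n, m (S n) <= q * m n.
  move=> n; rewrite /m.
  have h1 := HN1 (N1 + n)%nat ltac:(lia); simpl in h1.
  have h2 := hz (N1 + n)%nat; rewrite addnS.
  have h3 := Rmax_l (z (N1 + n)%nat - eps / 2) 0.
  have h4 := Rmax_r (z (N1 + n)%nat - eps / 2) 0.
  move: h1; rewrite Rminus_0_r => /Rabs_lt_between [_ h1].
  apply: Rmax_lub; last by apply: Rmult_le_pos.
  have : q * (z (N1 + n)%nat - eps / 2) <= q * Rmax (z (N1 + n)%nat - eps / 2) 0.
    by apply: Rmult_le_compat_l.
  nra.
have hm2 : forall n, m n <= m O * q ^ n.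
  elim=> [|n IH]; first by rewrite /= Rmult_1_r; lra.
  apply: Rle_trans (hm n) _; rewrite /=.
  have : q * m n <= q * (m O * q ^ n) by apply: Rmult_le_compat_l.
  lra.
have hq : Rabs q < 1 by rewrite Rabs_pos_eq; lra.
have hg : is_lim_seq (fun n => m O * q ^ n) 0.
  have := is_lim_seq_scal_l _ (m O) _ (is_lim_seq_geom _ hq).
  by rewrite /= Rmult_0_r.
have [N2 HN2] := proj2 (is_lim_seq_spec _ 0) hg (mkposreal (eps / 2) ltac:(lra)).
exists (N1 + N2)%nat => n hn.
have e1 : n = (N1 + (n - N1))%nat by lia.
have h5 := HN2 (n - N1)%nat ltac:(lia); simpl in h5.
rewrite Rminus_0_r in h5; move/Rabs_lt_between: h5 => [_ h5].
have h6 := hm2 (n - N1)%nat.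
have h7 : z (N1 + (n - N1))%nat - eps / 2 <= m (n - N1)%nat by apply: Rmax_l.
rewrite e1; lra.
Qed.

Section Analysis.
Variable K : R.
Hypothesis hK : 2 <= K.
Let lam := 2 * K - 1.
Variable C : R.
Hypothesis hC : 0 <= C.
Variables al be pi s d : nat -> R.
Hypothesis hal : forall n, 0 <= al n.
Hypothesis hbe : forall n, 0 <= be n.
Hypothesis a1 : forall n, al (S n) <= C + K * al n + (K - 1) * be n.
Hypothesis a2 : forall n, be (S n) <= C + (K - 1) * al n + K * be n.
Hypothesis hb : forall n, pi (S n) <= C + K * al n + K * be n.
Hypothesis c1 : forall n, 2 * al (S n) + be n <= 2 * C + pi (S n) + K * al n + (K - 1) * be n.
Hypothesis c2 : forall n, 2 * be (S n) + al n <= 2 * C + pi (S n) + (K - 1) * al n + K * be n.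
Hypothesis hs : forall n, (lam - 1) * s n + 1 = lam ^ (S n).
Hypothesis hd : forall n, (lam - 1) * d n + 2 * K = (lam - 1) + 2 * K * lam ^ n.

Lemma lam_gt1 : 1 < lam. Proof. rewrite /lam; lra. Qed.
Lemma lamn_pos n : 0 < lam ^ n. Proof. apply: pow_lt; have := lam_gt1; lra. Qed.

Let T n := al n + be n.
Let D := 2 * C / (lam - 1).
Let t n := (T n + D) / lam ^ n.

Lemma t_dec n : t (S n) <= t n.
Proof.
have hl := lam_gt1; have hp := lamn_pos n.
rewrite /t /= /T /D.
have hT : al (S n) + be (S n) <= 2 * C + lam * (al n + be n).
  have := a1 n; have := a2 n; rewrite /lam; lra.
have eq : (al n + be n + 2 * C / (lam - 1)) / lam ^ n =
   (lam * (al n + be n) + 2 * C + 2 * C / (lam - 1)) / (lam * lam ^ n).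
  field; lra.
rewrite eq; apply: Rmult_le_compat_r.
  by apply: Rlt_le; apply: Rinv_0_lt_compat; apply: Rmult_lt_0_compat; lra.
lra.
Qed.

Lemma t_pos n : 0 <= t n.
Proof.
have hl := lam_gt1; have hp := lamn_pos n; rewrite /t /T /D.
apply: Rle_mult_inv_pos => //.
have := hal n; have := hbe n.
have : 0 <= 2 * C / (lam - 1) by apply: Rle_mult_inv_pos; lra.
lra.
Qed.

Lemma t_conv : exists tau : R, is_lim_seq t tau.
Proof.
have [l Hl] := ex_finite_lim_seq_decr t 0 t_dec t_pos.
by exists l.
Qed.


Let TT n := T n / lam ^ n.
Let x n := al n / lam ^ n.
Let y n := be n / lam ^ n.

Lemma TT_conv (tau : R) : is_lim_seq t tau -> is_lim_seq TT tau.
Proof.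
move=> Ht; have hl := lam_gt1.
have := is_lim_seq_minus' _ _ _ _ Ht (@geom_div0 lam D hl).
rewrite Rminus_0_r; apply: is_lim_seq_ext => n.
have := lamn_pos n; rewrite /t /TT; move=> hp; field; lra.
Qed.

Lemma x_step n : x (S n) <= C / lam ^ (S n) + x n / lam + (K - 1) * TT n / lam.
Proof.
have hl := lam_gt1; have hp := lamn_pos n.
rewrite /x /TT /T.
have h := a1 n.
have e : C / lam ^ S n + al n / lam ^ n / lam + (K - 1) * ((al n + be n) / lam ^ n) / lam
   = (C + K * al n + (K - 1) * be n) / lam ^ (S n).
  rewrite /=; field; lra.
rewrite e; apply: Rmult_le_compat_r => //.
by apply: Rlt_le; apply: Rinv_0_lt_compat; apply: lamn_pos.
Qed.

Lemma y_step n : y (S n) <= C / lam ^ (S n) + y n / lam + (K - 1) * TT n / lam.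
Proof.
have hl := lam_gt1; have hp := lamn_pos n.
rewrite /y /TT /T.
have h := a2 n.
have e : C / lam ^ S n + be n / lam ^ n / lam + (K - 1) * ((al n + be n) / lam ^ n) / lam
   = (C + (K - 1) * al n + K * be n) / lam ^ (S n).
  rewrite /=; field; lra.
rewrite e; apply: Rmult_le_compat_r => //.
by apply: Rlt_le; apply: Rinv_0_lt_compat; apply: lamn_pos.
Qed.

Lemma half_step (u : nat -> R) (tau : R) :
  (forall n, u (S n) <= C / lam ^ (S n) + u n / lam + (K - 1) * TT n / lam) ->
  is_lim_seq TT tau ->
  forall eps, 0 < eps -> eventually (fun n => u n - tau / 2 <= eps).
Proof.
move=> hu hT.
have hl := lam_gt1.
pose e n := (K - 1) / lam * (TT n - tau) + C / lam ^ (S n).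
apply: (@contraction (/ lam) (fun n => u n - tau / 2) e).
- split; first by apply: Rlt_le; apply: Rinv_0_lt_compat; lra.
  rewrite -Rinv_1; apply: Rinv_lt_contravar; lra.
- move=> n; have hun := hu n; rewrite /e.
  have hp := lamn_pos (S n).
  have E : (/ lam) * (u n - tau / 2) + ((K - 1) / lam * (TT n - tau) + C / lam ^ S n) + tau / 2
     = C / lam ^ S n + u n / lam + (K - 1) * TT n / lam.
    rewrite /lam in hp *; field; split; lra.
  lra.
- have h1 : is_lim_seq (fun n => (K - 1) / lam * (TT n - tau)) 0.
    have := is_lim_seq_scal_l _ ((K - 1) / lam) _ (is_lim_seq_minus' _ _ _ _ hT (is_lim_seq_const tau)).
    by rewrite Rminus_diag /= Rmult_0_r.
  have h2 : is_lim_seq (fun n => C / lam ^ (S n)) 0.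
    by apply: (proj1 (is_lim_seq_incr_1 (fun n => C / lam ^ n) 0)); apply: geom_div0.
  have := is_lim_seq_plus' _ _ _ _ h1 h2; rewrite Rplus_0_r.
  by apply: is_lim_seq_ext.
Qed.

Lemma xy_conv (tau : R) : is_lim_seq TT tau ->
  is_lim_seq x (tau / 2) /\ is_lim_seq y (tau / 2).
Proof.
move=> hT.
have hx := half_step x tau x_step hT.
have hy := half_step y tau y_step hT.
have hxy : forall n, x n + y n = TT n.
  move=> n; have := lamn_pos n; rewrite /x /y /TT /T => hp; field; lra.
split; apply/is_lim_seq_spec => eps.
- have e3 : 0 < eps / 3 by have := cond_pos eps; lra.
  have [N1 H1] := hx _ e3.
  have [N2 H2] := hy _ e3.
  have [N3 H3] := proj2 (is_lim_seq_spec _ _) hT (mkposreal _ e3).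
  exists (N1 + N2 + N3)%nat => n hn.
  have := H1 n ltac:(lia); have := H2 n ltac:(lia); have := H3 n ltac:(lia).
  rewrite /= -hxy => /Rabs_lt_between [h3a h3b] h2 h1.
  apply/Rabs_lt_between; split; lra.
- have e3 : 0 < eps / 3 by have := cond_pos eps; lra.
  have [N1 H1] := hx _ e3.
  have [N2 H2] := hy _ e3.
  have [N3 H3] := proj2 (is_lim_seq_spec _ _) hT (mkposreal _ e3).
  exists (N1 + N2 + N3)%nat => n hn.
  have := H1 n ltac:(lia); have := H2 n ltac:(lia); have := H3 n ltac:(lia).
  rewrite /= -hxy => /Rabs_lt_between [h3a h3b] h2 h1.
  apply/Rabs_lt_between; split; lra.
Qed.


Lemma w_conv (tau : R) : is_lim_seq TT tau ->
  is_lim_seq (fun n => pi (S n) / lam ^ (S n)) (K * tau / lam).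
Proof.
move=> hT; have hl := lam_gt1.
have [hx hy] := xy_conv tau hT.
have hx1 : is_lim_seq (fun n => x (S n)) (tau / 2) by apply: (proj1 (is_lim_seq_incr_1 x (tau / 2))) hx.
have hc : is_lim_seq (fun n => C / lam ^ (S n)) 0.
  by apply: (proj1 (is_lim_seq_incr_1 (fun n => C / lam ^ n) 0)); apply: geom_div0.
have h2c : is_lim_seq (fun n => 2 * C / lam ^ (S n)) 0.
  by apply: (proj1 (is_lim_seq_incr_1 (fun n => 2 * C / lam ^ n) 0)); apply: geom_div0.
have hup : is_lim_seq (fun n => C / lam ^ (S n) + K / lam * TT n) (0 + K / lam * tau).
  apply: is_lim_seq_plus' => //.
  have := is_lim_seq_scal_l _ (K / lam) _ hT; by [].
have hlo : is_lim_seq (fun n => 2 * x (S n) - (K / lam * x n + (K - 2) / lam * y n) - 2 * C / lam ^ (S n))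
   (2 * (tau / 2) - (K / lam * (tau / 2) + (K - 2) / lam * (tau / 2)) - 0).
  apply: is_lim_seq_minus' => //.
  apply: is_lim_seq_minus'.
    have := is_lim_seq_scal_l _ 2 _ hx1; by [].
  apply: is_lim_seq_plus'.
    have := is_lim_seq_scal_l _ (K / lam) _ hx; by [].
  have := is_lim_seq_scal_l _ ((K - 2) / lam) _ hy; by [].
have e1 : 0 + K / lam * tau = K * tau / lam by field; lra.
have e2 : 2 * (tau / 2) - (K / lam * (tau / 2) + (K - 2) / lam * (tau / 2)) - 0 = K * tau / lam.
  rewrite /lam; field; lra.
rewrite e1 in hup; rewrite e2 in hlo.
apply: (is_lim_seq_le_le _ _ _ _ _ hlo hup) => n.
have hp := lamn_pos n; have hp1 := lamn_pos (S n).
have hb1 := hb n; have hc1 := c1 n.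
split.
- have E : 2 * x (S n) - (K / lam * x n + (K - 2) / lam * y n) - 2 * C / lam ^ S n
      = (2 * al (S n) + be n - 2 * C - K * al n - (K - 1) * be n) / lam ^ (S n).
    rewrite /x /y /= ; field; lra.
  rewrite E; apply: Rmult_le_compat_r; first by apply: Rlt_le; apply: Rinv_0_lt_compat.
  lra.
- have E : C / lam ^ S n + K / lam * TT n = (C + K * (al n + be n)) / lam ^ (S n).
    rewrite /TT /T /=; field; lra.
  rewrite E; apply: Rmult_le_compat_r; first by apply: Rlt_le; apply: Rinv_0_lt_compat.
  lra.
Qed.

Lemma analysis_main : exists L : R,
  [/\ is_lim_seq (fun n => al n / s n) L, is_lim_seq (fun n => be n / s n) L
    & is_lim_seq (fun n => pi n / d n) L].
Proof.
have hl := lam_gt1.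
have [tau ht] := t_conv.
have hT := TT_conv tau ht.
have [hx hy] := xy_conv tau hT.
have hw := w_conv tau hT.
have hs1 : is_lim_seq (fun n => s n / lam ^ n) (lam / (lam - 1)).
  have := is_lim_seq_minus' _ _ _ _ (is_lim_seq_const (lam / (lam - 1)))
      (@geom_div0 lam (/ (lam - 1)) hl).
  rewrite Rminus_0_r; apply: is_lim_seq_ext => n.
  have hp := lamn_pos n; have := hs n; rewrite /= => e.
  have -> : s n = (lam * lam ^ n - 1) / (lam - 1) by rewrite -e; field; lra.
  field; lra.
have spos n : 0 < s n.
  have := hs n; have := pow_R1_Rle lam n ltac:(lra); rewrite /= => h1 e.
  have : (lam - 1) * s n > 0 by nra.
  move=> h; nra.
have hd1 : is_lim_seq (fun n => d n / lam ^ n) (2 * K / (lam - 1)).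
  have := is_lim_seq_plus' _ _ _ _ (is_lim_seq_const (2 * K / (lam - 1)))
      (@geom_div0 lam ((lam - 1 - 2 * K) / (lam - 1)) hl).
  rewrite Rplus_0_r; apply: is_lim_seq_ext => n.
  have hp := lamn_pos n; have := hd n => e.
  have -> : d n = ((lam - 1) + 2 * K * lam ^ n - 2 * K) / (lam - 1) by rewrite -e; field; lra.
  field; lra.
have dpos n : 0 < d n.
  have := hd n; have := pow_R1_Rle lam n ltac:(lra) => h1 e.
  have : (lam - 1) * d n >= lam - 1 by nra.
  move=> h; nra.
exists ((tau / 2) / (lam / (lam - 1))); split.
- have := is_lim_seq_div' _ _ _ _ hx hs1 ltac:(apply: Rgt_not_eq; apply: Rdiv_lt_0_compat; lra).
  apply: is_lim_seq_ext => n; have := spos n; have := lamn_pos n => h1 h2.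
  rewrite /x; field; lra.
- have := is_lim_seq_div' _ _ _ _ hy hs1 ltac:(apply: Rgt_not_eq; apply: Rdiv_lt_0_compat; lra).
  apply: is_lim_seq_ext => n; have := spos n; have := lamn_pos n => h1 h2.
  rewrite /y; field; lra.
- apply/is_lim_seq_incr_1.
  have hd2 : is_lim_seq (fun n => d (S n) / lam ^ (S n)) (2 * K / (lam - 1)).
    by apply/(is_lim_seq_incr_1 (fun n => d n / lam ^ n)).
  have := is_lim_seq_div' _ _ _ _ hw hd2 ltac:(apply: Rgt_not_eq; apply: Rdiv_lt_0_compat; lra).
  have -> : K * tau / lam / (2 * K / (lam - 1)) = tau / 2 / (lam / (lam - 1)).
    by rewrite /lam; field; lra.
  apply: is_lim_seq_ext => n; have := dpos (S n); have := lamn_pos (S n) => h1 h2.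
  field; lra.
Qed.

End Analysis.

Lemma INR_muln a b : INR (a * b)%N = INR a * INR b.
Proof. exact: mult_INR. Qed.
Lemma INR_addn a b : INR (a + b)%N = INR a + INR b.
Proof. exact: plus_INR. Qed.
Lemma INR_expn a n : INR (a ^ n)%N = INR a ^ n.
Proof. elim: n => [|n IH]; first by rewrite expn0. by rewrite expnS INR_muln IH. Qed.

Lemma ln0 : ln 0 = 0.
Proof. rewrite /ln; case: Rlt_dec => // h; exfalso; lra. Qed.

Lemma lnINR_ge0 n : 0 <= ln (INR n).
Proof.
case: n => [|n]; first by rewrite ln0; lra.
rewrite -ln_1; apply: ln_le; first lra.
have := pos_INR n; rewrite S_INR; lra.
Qed.

Lemma INR_pos n : (0 < n)%N -> 0 < INR n.
Proof. by case: n => // n _; have := pos_INR n; rewrite S_INR; lra. Qed.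

Lemma lnINR_mul a b : (0 < a)%N -> (0 < b)%N -> ln (INR (a * b)%N) = ln (INR a) + ln (INR b).
Proof. by move=> ha hb; rewrite INR_muln ln_mult //; apply: INR_pos. Qed.

Lemma lnINR_pow a n : (0 < a)%N -> ln (INR (a ^ n)%N) = INR n * ln (INR a).
Proof. by move=> ha; rewrite INR_expn ln_pow //; apply: INR_pos. Qed.

Lemma lnINR_le a b : (0 < a)%N -> (a <= b)%N -> ln (INR a) <= ln (INR b).
Proof. by move=> ha hab; apply: ln_le; [apply: INR_pos | apply: le_INR; apply/leP]. Qed.

Lemma prod_class k (F : 'I_(2 * k) -> nat) x y :
  (forall l : 'I_(2 * k), F l = if (l < k)%N then x else y) ->
  (\prod_(l <- enum 'I_(2 * k)) F l = x ^ k * y ^ k)%N.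
Proof.
move=> HF.
rewrite (eq_bigr (fun l : 'I_(2 * k) => (fun i : nat => if (i < k)%N then x else y) (val l))); last first.
  by move=> l _; rewrite HF.
rewrite -(big_map val xpredT (fun i : nat => if (i < k)%N then x else y)) val_enum_ord.
have -> : iota 0 (2 * k) = index_iota 0 (2 * k) by rewrite /index_iota subn0.
rewrite (big_cat_nat (n := k)) //; last by lia.
have e1 : (\prod_(0 <= i < k) (if (i < k)%N then x else y) = x ^ k)%N.
  rewrite big_nat_cond (eq_bigr (fun _ => x)); last by move=> i /andP [/andP [_ ->]].
  by rewrite -big_nat_cond prod_nat_const_nat subn0.
have e2 : (\prod_(k <= i < 2 * k) (if (i < k)%N then x else y) = y ^ k)%N.
  rewrite big_nat_cond (eq_bigr (fun _ => y)); last first.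
    by move=> i /andP [/andP [hi _] _]; rewrite ltnNge hi.
  by rewrite -big_nat_cond prod_nat_const_nat; congr (_ ^ _)%N; lia.
by rewrite e1 e2.
Qed.

Lemma INR_pred2k k : (0 < k)%N -> INR (2 * k).-1 = 2 * INR k - 1.
Proof.
move=> kp; have e : ((2 * k).-1 + 1 = 2 * k)%N by lia.
have := congr1 INR e; rewrite INR_addn INR_muln /=; lra.
Qed.

Lemma INR_pred2k2 k : (1 < k)%N -> INR ((2 * k).-1).-1 = 2 * INR k - 2.
Proof.
move=> kp; have e : (((2 * k).-1).-1 + 2 = 2 * k)%N by lia.
have := congr1 INR e; rewrite INR_addn INR_muln /=; lra.
Qed.

Theorem proposition4p5_aux (k : nat) (hk : (2 <= k)%nat) (A : finType) (Am : rel A)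
    (i : 'I_(2 * k)) :
  is_lim_seq
    (fun n => (ln (INR (p_n k Am n)) / INR (size (delta k n)))%R)
    (LimSup_seq
       (fun n => (ln (INR (p_stem Am i n)) / INR (size (stemset i n)))%R)).
Proof.
have kpos : (0 < k)%N by lia.
have h0 : (0 < 2 * k)%N by lia.
have h1 : (1 < 2 * k)%N by lia.
have hk2 : (k < 2 * k)%N by lia.
have hk3 : (k.+1 < 2 * k)%N by lia.
pose jF : 'I_(2 * k) := Ordinal h0.
pose jF1 : 'I_(2 * k) := Ordinal h1.
pose jG : 'I_(2 * k) := Ordinal hk2.
pose jG1 : 'I_(2 * k) := Ordinal hk3.
pose PF n := PP Am n jF.
pose PG n := PP Am n jG.
have Pcl : forall n (l : 'I_(2 * k)), PP Am n l = if (l < k)%N then PF n else PG n.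
  move=> n l; case: ifP => hl.
    by apply: (PP_sym kpos); rewrite hl /=; lia.
  by apply: (PP_sym kpos); rewrite hl /= ltnn.
have pnE : forall n, p_n k Am n = pb k Am n.
  move=> n; rewrite /p_n (npat_Cw kpos) //; apply/allP => w; rewrite mem_delta.
  by case/andP.
have psE : forall n, p_stem Am i n = PP Am n i.
  move=> n; rewrite /p_stem (npat_Cw kpos) //; apply/allP => w; exact: stem_reduced.
have prodE : forall n, (\prod_(l <- enum 'I_(2 * k)) PP Am n l = PF n ^ k * PG n ^ k)%N.
  by move=> n; apply: prod_class => l; apply: Pcl.
have ginvF : ginv jF = jG by apply: val_inj; rewrite (ginvE kpos) /= kpos.
have ginvG : ginv jG = jF by apply: val_inj; rewrite (ginvE kpos) /= ltnn subnn.
have PiF : forall n, (PG n * \prod_(l <- enum 'I_(2 * k) | l != ginv jF) PP Am n l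
    = PF n ^ k * PG n ^ k)%N.
  move=> n; rewrite -prodE (bigD1_seq (ginv jF)) ?mem_enum ?enum_uniq //.
  by rewrite ginvF.
have PiG : forall n, (PF n * \prod_(l <- enum 'I_(2 * k) | l != ginv jG) PP Am n l
    = PF n ^ k * PG n ^ k)%N.
  move=> n; rewrite -prodE (bigD1_seq (ginv jG)) ?mem_enum ?enum_uniq //.
  by rewrite ginvG.
case: (excluded_middle_informative (exists t : word k -> A, inX Am t)) => [[t0 Ht0]|no]; last first.
  have P0 : forall n (l : 'I_(2 * k)), PP Am n l = 0%N.
    by move=> n l; rewrite /PP Cw_empty // => t Ht; apply: no; exists t.
  have p0 : forall n, pb k Am n = 0%N.
    by move=> n; rewrite /pb Cw_empty // => t Ht; apply: no; exists t.
  have -> : LimSup_seq (fun n => ln (INR (p_stem Am i n)) / INR (size (stemset i n))) = 0.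
    apply: is_LimSup_seq_unique; apply: is_lim_LimSup_seq.
    apply: (is_lim_seq_ext (fun _ => 0)); last exact: is_lim_seq_const.
    by move=> n; rewrite psE P0 /= ln0 /Rdiv Rmult_0_l.
  apply: (is_lim_seq_ext (fun _ => 0)); last exact: is_lim_seq_const.
  by move=> n; rewrite pnE p0 /= ln0 /Rdiv Rmult_0_l.
have PFpos : forall n, (0 < PF n)%N by move=> n; apply: (Cw_pos _ Ht0).
have PGpos : forall n, (0 < PG n)%N by move=> n; apply: (Cw_pos _ Ht0).
have ppos : forall n, (0 < pb k Am n)%N by move=> n; apply: (Cw_pos _ Ht0).
have Apos : (0 < #|A|)%N by apply/card_gt0P; exists (t0 [::]).
pose K := INR k.
pose C := ln (INR #|A|).
pose al n := ln (INR (PF n)).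
pose be n := ln (INR (PG n)).
pose pi n := ln (INR (pb k Am n)).
have hK : 2 <= K by rewrite /K; apply: (le_INR 2); apply/leP.
have hC : 0 <= C by apply: lnINR_ge0.
have lnPiF : forall n, ln (INR (\prod_(l <- enum 'I_(2 * k) | l != ginv jF) PP Am n l))
    = K * al n + K * be n - be n.
  move=> n; have e := congr1 (fun m => ln (INR m)) (PiF n); move: e => /=.
  have hpos : (0 < \prod_(l <- enum 'I_(2 * k) | l != ginv jF) PP Am n l)%N.
    have : (0 < PF n ^ k * PG n ^ k)%N by rewrite muln_gt0 !expn_gt0 PFpos PGpos.
    by rewrite -PiF muln_gt0 => /andP [].
  rewrite lnINR_mul // lnINR_mul ?expn_gt0 ?PFpos ?PGpos // !lnINR_pow //.
  rewrite /al /be /K; lra.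
have lnPiG : forall n, ln (INR (\prod_(l <- enum 'I_(2 * k) | l != ginv jG) PP Am n l))
    = K * al n + K * be n - al n.
  move=> n; have e := congr1 (fun m => ln (INR m)) (PiG n); move: e => /=.
  have hpos : (0 < \prod_(l <- enum 'I_(2 * k) | l != ginv jG) PP Am n l)%N.
    have : (0 < PF n ^ k * PG n ^ k)%N by rewrite muln_gt0 !expn_gt0 PFpos PGpos.
    by rewrite -PiG muln_gt0 => /andP [].
  rewrite lnINR_mul // lnINR_mul ?expn_gt0 ?PFpos ?PGpos // !lnINR_pow //.
  rewrite /al /be /K; lra.
have PiFpos : forall n, (0 < \prod_(l <- enum 'I_(2 * k) | l != ginv jF) PP Am n l)%N.
  move=> n; have : (0 < PF n ^ k * PG n ^ k)%N by rewrite muln_gt0 !expn_gt0 PFpos PGpos.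
  by rewrite -PiF muln_gt0 => /andP [].
have PiGpos : forall n, (0 < \prod_(l <- enum 'I_(2 * k) | l != ginv jG) PP Am n l)%N.
  move=> n; have : (0 < PF n ^ k * PG n ^ k)%N by rewrite muln_gt0 !expn_gt0 PFpos PGpos.
  by rewrite -PiG muln_gt0 => /andP [].
have a1 : forall n, al (S n) <= C + K * al n + (K - 1) * be n.
  move=> n.
  have h : (PF n.+1 <= #|A| * \prod_(l <- enum 'I_(2 * k) | l != ginv jF) PP Am n l)%N
    := ineq_a kpos Am n jF.
  have := @lnINR_le _ _ (PFpos n.+1) h; rewrite lnINR_mul // lnPiF.
  rewrite /al /C; lra.
have a2 : forall n, be (S n) <= C + (K - 1) * al n + K * be n.
  move=> n.
  have h : (PG n.+1 <= #|A| * \prod_(l <- enum 'I_(2 * k) | l != ginv jG) PP Am n l)%N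
    := ineq_a kpos Am n jG.
  have := @lnINR_le _ _ (PGpos n.+1) h; rewrite lnINR_mul // lnPiG.
  rewrite /be /C; lra.
have hb : forall n, pi (S n) <= C + K * al n + K * be n.
  move=> n.
  have h : (pb k Am n.+1 <= #|A| * \prod_(l <- enum 'I_(2 * k)) PP Am n l)%N
    := ineq_b k Am n.
  rewrite prodE in h.
  have := @lnINR_le _ _ (ppos n.+1) h.
  rewrite lnINR_mul ?muln_gt0 ?expn_gt0 ?PFpos ?PGpos // lnINR_mul ?expn_gt0 ?PFpos ?PGpos //.
  rewrite !lnINR_pow // /pi /al /be /C /K; lra.
have c1 : forall n, 2 * al (S n) + be n <= 2 * C + pi (S n) + K * al n + (K - 1) * be n.
  move=> n.
  have n1 : jG1 != ginv jF by rewrite ginvF; apply/eqP => /(congr1 val) /=; lia.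
  have n2 : (jG1 < k)%N = (ginv jF < k)%N by rewrite ginvF /=; apply/idP/idP => //; lia.
  have h : (PF n.+1 ^ 2 * PP Am n jG1 <=
      #|A| ^ 2 * pb k Am n.+1 * \prod_(l <- enum 'I_(2 * k) | l != ginv jF) PP Am n l)%N
    := ineq_c kpos Am n n1 n2.
  have eG : PP Am n jG1 = PG n by rewrite Pcl /= ltnNge leqW.
  rewrite eG in h.
  have hpos : (0 < PF n.+1 ^ 2 * PG n)%N by rewrite muln_gt0 expn_gt0 PFpos PGpos.
  have := @lnINR_le _ _ hpos h.
  rewrite lnINR_mul ?expn_gt0 ?PFpos ?PGpos // lnINR_pow //.
  rewrite lnINR_mul ?muln_gt0 ?expn_gt0 ?Apos ?ppos ?PiFpos // lnINR_mul ?expn_gt0 ?Apos ?ppos //.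
  rewrite lnINR_pow // lnPiF /al /be /pi /C /K /=; lra.
pose s n := INR (size (stemset i n)).
pose d n := INR (size (delta k n)).
have hs : forall n, (2 * K - 1 - 1) * s n + 1 = (2 * K - 1) ^ S n.
  move=> n; have := congr1 INR (size_stem kpos i n).
  rewrite INR_addn INR_muln INR_expn INR_pred2k2 // INR_pred2k //.
  have i1 : INR 1 = 1 by [].
  rewrite i1 => e; rewrite /s /K; nra.
have hd : forall n, (2 * K - 1 - 1) * d n + 2 * K = (2 * K - 1 - 1) + 2 * K * (2 * K - 1) ^ n.
  move=> n; have := congr1 INR (size_delta kpos n).
  rewrite INR_addn [in RHS]INR_addn !INR_muln INR_expn INR_pred2k2 // INR_pred2k //.
  have i2 : INR 2 = 2 by rewrite /=; ring.
  rewrite i2 => e; rewrite /d /K; nra.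
have hal : forall n, 0 <= al n by move=> n; apply: lnINR_ge0.
have hbe : forall n, 0 <= be n by move=> n; apply: lnINR_ge0.
have [L [HA HB HP]] := analysis_main K hK C hC al be pi s d hal hbe a1 a2 hb c1 hs hd.
have -> : LimSup_seq (fun n => ln (INR (p_stem Am i n)) / INR (size (stemset i n))) = L.
  apply: is_LimSup_seq_unique; apply: is_lim_LimSup_seq.
  case: (boolP (i < k)%N) => hi.
    apply: (is_lim_seq_ext _ _ _ _ HA) => n.
    by rewrite psE Pcl hi.
  apply: (is_lim_seq_ext _ _ _ _ HB) => n.
  by rewrite psE Pcl (negbTE hi).
apply: (is_lim_seq_ext _ _ _ _ HP) => n.
by rewrite pnE.
Qed.

End RealPart.

Theorem proposition4p5 (k : nat) (hk : (2 <= k)%nat) (A : finType) (Am : rel A)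
    (i : 'I_(2 * k)) :
  is_lim_seq
    (fun n => (ln (INR (p_n k Am n)) / INR (size (delta k n)))%R)
    (LimSup_seq
       (fun n => (ln (INR (p_stem Am i n)) / INR (size (stemset i n)))%R)).
Proof. exact (proposition4p5_aux k hk A Am i). Qed.
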